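(* Let $(D,\vec F,0)$ and $(D',\vec F',0')$ be decision graphs and let $\ell:D\to D'$ satisfy $\ell(0)=0'$ and $\ell({\cal O}(v))={\cal O}(\ell(v))$ for all $v\in D$. Let $n\geq1$, and let $L_n$ and $L'_n$ be the Boolean functions associated with the game-graphs $G_n(D)$ and $G_n(D')$. Then $\ell$ maps $\partial G_n(D)$ into $\partial G_n(D')$, and $$L'_n(x)=L_n(x\circ\ell)\qquad\text{for all } x\in\{0,1\}^{\partial G_n(D')}.$$
   Context: **Decision graph.** A decision graph is a triple $(D,\vec F,0)$ where $(D,\vec F)$ is a directed graph, every $w\in D$ is reachable from $0$ by a directed path, $|w|=|v|+1$ for every $(v,w)\in\vec F$ (where $|w|$ denotes the directed graph distance from $0$ to $w$), and ${\cal O}(w):=\{u:(w,u)\in\vec F\}\neq\emptyset$ for all $w$. **Game-graph $G_n(D)$.** It has vertex set $\{w\in D:|w|\leq n\}$ and edges the elements of $\vec F$ between such vertices, with root $0$. Its set of possible outcomes is $\partial G_n(D)=\{w:|w|=n\}$. The turn function is $\tau(v)=1$ if $|v|$ is even and $\tau(v)=2$ if $|v|$ is odd, for $|v|<n$. **Associated Boolean function $L_n$.** For $x:\partial G_n(D)\to\{0,1\}$, extend to $\bar x$ by $\bar x=x$ at level $n$ and, for $|v|<n$, $\bar x(v)=\min_{w\in{\cal O}(v)}\bar x(w)$ if $|v|$ is even and $\bar x(v)=\max_{w\in{\cal O}(v)}\bar x(w)$ if $|v|$ is odd. Set $L_n(x):=\bar x(0)$. Also $(x\circ\ell)(v)=x(\ell(v))$.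 *)

(* Defs.v *)
From Stdlib Require Import Arith Classical ClassicalEpsilon.

Section DG.
Variables (D : Type) (E : D -> D -> Prop) (r : D).

Inductive reach : nat -> D -> Prop :=
| reach0 : reach 0 r
| reachS k v w : reach k v -> E v w -> reach (S k) w.

Definition dist (w : D) (k : nat) : Prop :=
  reach k w /\ forall j, j < k -> ~ reach j w.

Definition out (w : D) : D -> Prop := fun u => E w u.

Definition decision_graph : Prop :=
  (forall w, exists k, reach k w) /\
  (forall v w, E v w -> forall k, dist v k -> dist w (S k)) /\
  (forall w, exists u, E w u).

(* the set of outcomes dG_n(D) = { w : |w| = n } *)
Definition boundary (n : nat) : Type := { w : D | dist w n }.

Definition bool_of (P : Prop) : bool :=
  if excluded_middle_informative P then true else false.

Section Ln.
Variables (n : nat) (x : boundary n -> bool).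

Definition xlev (v : D) : bool :=
  match excluded_middle_informative (dist v n) with
  | left h => x (exist _ v h)
  | right _ => false
  end.

(* xbar_m v : the extension \bar x at a vertex v of level n - m;
   minimum over O(v) if the level is even, maximum if odd *)
Fixpoint xbar (m : nat) (v : D) : bool :=
  match m with
  | 0 => xlev v
  | S m' =>
      if Nat.even (n - m)
      then bool_of (forall w, E v w -> xbar m' w = true)
      else bool_of (exists w, E v w /\ xbar m' w = true)
  end.

Definition Ln : bool := xbar n r.
End Ln.
End DG.

Arguments boundary {D} E r n.

(* Main.v *)
Require Import Defs.
From Stdlib Require Import Arith Lia Classical ClassicalEpsilon ProofIrrelevance.

Lemma reach_dist (D : Type) (E : D -> D -> Prop) (r : D)
  (HD : decision_graph D E r) k w : reach D E r k w -> dist D E r w k.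
Proof.
  destruct HD as [_ [He _]].
  induction 1.
  - split; [constructor | intros j Hj; lia].
  - eapply He; eauto.
Qed.

Lemma dist_uniq (D : Type) (E : D -> D -> Prop) (r : D) w k j :
  dist D E r w k -> dist D E r w j -> k = j.
Proof.
  intros [Hk Hk'] [Hj Hj'].
  destruct (Nat.lt_total k j) as [H|[H|H]]; auto.
  - exfalso; exact (Hj' _ H Hk).
  - exfalso; exact (Hk' _ H Hj).
Qed.

Lemma reach_map (D : Type) (E : D -> D -> Prop) (r : D)
  (D' : Type) (E' : D' -> D' -> Prop) (r' : D') (l : D -> D')
  (Hl0 : l r = r') (He : forall v w, E v w -> E' (l v) (l w)) k v :
  reach D E r k v -> reach D' E' r' k (l v).
Proof.
  induction 1.
  - rewrite Hl0; constructor.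
  - econstructor; eauto.
Qed.

Theorem lemma8 (D : Type) (E : D -> D -> Prop) (r : D)
  (D' : Type) (E' : D' -> D' -> Prop) (r' : D')
  (HD : decision_graph D E r) (HD' : decision_graph D' E' r')
  (l : D -> D') (Hl0 : l r = r')
  (HlO : forall v : D,
      (forall w, E v w -> E' (l v) (l w)) /\
      (forall u, E' (l v) u -> exists w, E v w /\ l w = u))
  (n : nat) (Hn : 1 <= n) :
  exists hmap : forall v : D, dist D E r v n -> dist D' E' r' (l v) n,
    forall x : boundary E' r' n -> bool,
      Ln D' E' r' n x =
      Ln D E r n (fun v => x (exist _ (l (proj1_sig v)) (hmap (proj1_sig v) (proj2_sig v)))).
Proof.
  assert (He : forall v w, E v w -> E' (l v) (l w)) by (intros v; apply (HlO v)).
  assert (Hiff : forall v, dist D E r v n <-> dist D' E' r' (l v) n).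
  { intros v; split.
    - intros [H _]. apply (reach_dist _ _ _ HD').
      eapply reach_map; eauto.
    - intros H. destruct (proj1 HD v) as [k Hk].
      assert (Hd := reach_dist _ _ _ HD _ _ Hk).
      assert (Hd' := reach_dist _ _ _ HD' _ _ (reach_map _ _ _ _ _ _ l Hl0 He _ _ Hk)).
      rewrite (dist_uniq _ _ _ _ _ _ Hd' H) in Hd. exact Hd. }
  exists (fun v h => proj1 (Hiff v) h).
  intros x. unfold Ln.
  set (y := fun v : boundary E r n => _).
  assert (Hg : forall m v, xbar D' E' r' n x m (l v) = xbar D E r n y m v).
  2:{ rewrite <- Hg, Hl0; reflexivity. }
  intros m. induction m as [|m IH]; intros v; simpl.
  - unfold xlev.
    destruct (excluded_middle_informative (dist D' E' r' (l v) n)) as [h1|h1];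
    destruct (excluded_middle_informative (dist D E r v n)) as [h2|h2]; simpl.
    + unfold y; simpl. f_equal. apply f_equal. apply proof_irrelevance.
    + exfalso. apply h2, Hiff, h1.
    + exfalso. apply h1, Hiff, h2.
    + reflexivity.
  - destruct (Nat.even (n - S m)); unfold bool_of.
    + destruct (excluded_middle_informative _) as [h1|h1];
      destruct (excluded_middle_informative _) as [h2|h2]; auto; exfalso.
      * apply h2. intros w Hw. rewrite <- IH. apply h1. apply He; auto.
      * apply h1. intros u Hu. destruct (proj2 (HlO v) u Hu) as [w [Hw <-]].
        rewrite IH. apply h2; auto.
    + destruct (excluded_middle_informative _) as [h1|h1];
      destruct (excluded_middle_informative _) as [h2|h2]; auto; exfalso.
      * apply h2. destruct h1 as [u [Hu Hx]].
        destruct (proj2 (HlO v) u Hu) as [w [Hw <-]].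
        exists w. rewrite <- IH. auto.
      * apply h1. destruct h2 as [w [Hw Hx]].
        exists (l w). rewrite IH. auto.
Qed.
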